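(* Let $S$ be a nonabelian finite simple group, $I$ an infinite set, and $G=S^I$ with the product topology. Then $G$ is not strongly complete, and every normal subgroup $U$ of finite index in $G$ is either open in $G$ or not of profinite type (as an abstract group).
   Context: An abstract group is of profinite type if it admits a topology making it a profinite group. A profinite group is strongly complete if every subgroup of finite index is open. *)

(* Defs.v *)
From mathcomp Require Import all_boot all_fingroup all_solvable.
From Stdlib Require List.
Set Implicit Arguments. Unset Strict Implicit. Unset Printing Implicit Defensive.

Definition infinite_type (I : Type) : Prop :=
  ~ exists l : list I, forall i : I, List.In i l.

Section Prod.
Variables (gT : finGroupType) (I : Type).

Definition pmul (f g : I -> gT) : I -> gT := fun i => (f i * g i)%g.
Definition pinv (f : I -> gT) : I -> gT := fun i => ((f i)^-1)%g.
Definition pone : I -> gT := fun _ => 1%g.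

(* product topology on S^I, S discrete: W is open iff every point of W has
   a basic neighbourhood (agreement on a finite set of coordinates) inside W *)
Definition prod_open (W : (I -> gT) -> Prop) : Prop :=
  forall f, W f -> exists F : list I,
    forall g, (forall i, List.In i F -> g i = f i) -> W g.

Definition subgroup (U : (I -> gT) -> Prop) : Prop :=
  [/\ U pone, (forall f g, U f -> U g -> U (pmul f g))
    & (forall f, U f -> U (pinv f))].

Definition normal_subgroup (U : (I -> gT) -> Prop) : Prop :=
  subgroup U /\ forall f g, U f -> U (pmul (pinv g) (pmul f g)).

Definition finite_index (U : (I -> gT) -> Prop) : Prop :=
  exists reps : list (I -> gT),
    forall g, exists r, List.In r reps /\ U (pmul (pinv r) g).

Definition strongly_complete_prod : Prop :=
  forall U, subgroup U -> finite_index U -> prod_open U.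
End Prod.

Section Profinite.
Variables (T : Type) (H : T -> Prop) (mul : T -> T -> T) (inv : T -> T).
Variable O : (T -> Prop) -> Prop.

Definition is_topology_on : Prop :=
  [/\ O H, O (fun _ => False),
      (forall A, O A -> forall x, A x -> H x),
      (forall C : (T -> Prop) -> Prop, (forall A, C A -> O A) ->
          O (fun x => exists A, C A /\ A x))
    & (forall A B, O A -> O B -> O (fun x => A x /\ B x))].

Definition mul_continuous : Prop :=
  forall x y, H x -> H y -> forall W, O W -> W (mul x y) ->
    exists A B, [/\ O A, O B, A x, B y &
      forall a b, A a -> B b -> W (mul a b)].

Definition inv_continuous : Prop :=
  forall x, H x -> forall W, O W -> W (inv x) ->
    exists A, [/\ O A, A x & forall a, A a -> W (inv a)].

Definition compact_on : Prop :=
  forall C : (T -> Prop) -> Prop, (forall A, C A -> O A) ->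
    (forall x, H x -> exists A, C A /\ A x) ->
    exists l : list (T -> Prop), (forall A, List.In A l -> C A) /\
      (forall x, H x -> exists A, List.In A l /\ A x).

Definition hausdorff_on : Prop :=
  forall x y, H x -> H y -> x <> y ->
    exists A B, [/\ O A, O B, A x, B y & forall z, A z -> B z -> False].

Definition connected_on (A : T -> Prop) : Prop :=
  forall V W, O V -> O W -> (forall z, A z -> V z \/ W z) ->
    (forall z, A z -> V z -> W z -> False) ->
    (forall z, A z -> V z) \/ (forall z, A z -> W z).

Definition totally_disconnected_on : Prop :=
  forall A, (forall z, A z -> H z) -> connected_on A ->
    forall x y, A x -> A y -> x = y.

Definition is_profinite_group_on : Prop :=
  [/\ is_topology_on, mul_continuous, inv_continuous, compact_on &
      hausdorff_on /\ totally_disconnected_on].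
End Profinite.

Definition profinite_type (gT : finGroupType) (I : Type)
  (U : (I -> gT) -> Prop) : Prop :=
  exists O, is_profinite_group_on U (@pmul gT I) (@pinv gT I) O.

(* Main.v *)
Require Import Defs.
From mathcomp Require Import all_boot all_fingroup all_solvable.
From mathcomp Require classical_sets filter.
From Stdlib Require Import ClassicalEpsilon FunctionalExtensionality PropExtensionality.
From Stdlib Require List.
Set Implicit Arguments. Unset Strict Implicit. Unset Printing Implicit Defensive.
Local Open Scope group_scope.

Lemma ultra_exists (I : Type) : infinite_type I -> exists u : (I -> Prop) -> Prop,
 [/\ u (fun _ => True), (forall A B, u A -> u B -> u (fun i => A i /\ B i)),
   (forall A B : I -> Prop, (forall i, A i -> B i) -> u A -> u B),
   (~ u (fun _ => False)) &
   ((forall A, u A \/ u (fun i => ~ A i)) /\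
   (forall l : list I, u (fun i => ~ List.In i l)))].
Proof.
move=> infI.
pose F0 := fun A : I -> Prop => exists l : list I, forall i, ~ List.In i l -> A i.
have FF : filter.ProperFilter F0.
  constructor.
    move=> [l Hl]; apply: infI; exists l => i.
    by apply: NNPP => H; exact: (Hl i H).
  constructor.
  - by exists nil.
  - move=> A B [l1 H1] [l2 H2]; exists (l1 ++ l2) => i Hi.
    split; [apply: H1|apply: H2] => H; apply: Hi; apply List.in_or_app; tauto.
  - move=> A B AB [l H]; exists l => i Hi; exact: AB (H i Hi).
have [u [uU sub]] := filter.ultraFilterLemma FF.
have uP : filter.ProperFilter u := filter.ultra_proper.
exists u; split.
- exact: (@filter.filterT _ u _).
- move=> A B; exact: (@filter.filterI _ u _).
- move=> A B; exact: (@filter.filterS _ u _).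
- exact: (@filter.filter_not_empty _ u _).
- split; first by move=> A; exact: (filter.in_ultra_setVsetC A uU).
  move=> l; apply: sub; exists l => i; done.
Qed.
Lemma In_mem (T : eqType) (x : T) (s : seq T) : x \in s -> List.In x s.
Proof.
elim: s => //= y s IH; rewrite in_cons => /orP [/eqP ->|/IH]; [left|right] => //.
Qed.

Section Part1.
Variables (gT : finGroupType) (I : Type).

Lemma part1 : (exists s : gT, s != 1) -> infinite_type I -> ~ strongly_complete_prod gT I.
Proof.
move=> [s ns] infI.
have [u [uT uI uS u0 [uU ucof]]] := ultra_exists infI.
pose U := fun f : I -> gT => u (fun i => f i = 1).
have partition : forall (g : I -> gT) (vs : list gT),
    u (fun i => List.In (g i) vs) -> exists v, List.In v vs /\ u (fun i => g i = v).
  move=> g; elim=> [|v vs IH] /= H.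
    by case: u0; apply: uS H.
  case: (uU (fun i => g i = v)) => [Hv|Hnv]; first by exists v; split; [left|].
  have [w [Hw uw]] : exists w, List.In w vs /\ u (fun i => g i = w).
    apply: IH; apply: uS (uI _ _ H Hnv) => i [[->|]] //.
  by exists w; split; [right|].
move=> SC.
have : prod_open U.
  apply: SC.
    split.
    - by apply: uS uT.
    - move=> f g Hf Hg; apply: uS (uI _ _ Hf Hg) => i [Hfi Hgi].
      by rewrite /pmul Hfi Hgi mulg1.
    - move=> f Hf; apply: uS Hf => i Hfi; by rewrite /pinv Hfi invg1.
  exists (map (fun v : gT => fun _ : I => v) (enum gT)) => g.
  have [v [Hv uv]] : exists v, List.In v (enum gT) /\ u (fun i => g i = v).
    apply: partition; apply: uS uT => i _; apply: In_mem; by rewrite mem_enum.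
  exists (fun _ => v); split; first exact: (List.in_map (fun v : gT => fun _ : I => v)).
  apply: uS uv => i Hi; by rewrite /pmul /pinv Hi mulVg.
move=> /(_ (@pone gT I)) [].
  by apply: uS uT.
move=> F HF.
pose g := fun i => if excluded_middle_informative (List.In i F) then 1 else s.
have : U g.
  apply: HF => i Hi; rewrite /g; destruct (excluded_middle_informative (List.In i F)) => //.
move=> Ug; apply: u0; apply: uS (uI _ _ (ucof F) Ug) => i [nI].
rewrite /g; destruct (excluded_middle_informative (List.In i F)) => //.
by move=> /= Hs; rewrite Hs eqxx in ns.
Qed.
End Part1.
Section GT.
Variable gT : finGroupType.
Hypothesis simS : simple [set: gT].
Hypothesis nabS : ~~ abelian [set: gT].

Lemma center_triv (s : gT) : (forall t, s * t = t * s) -> s = 1.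
Proof.
move=> Hs.
have /simpleP [_ simG] := simS.
have [Z1|ZT] := simG _ (center_normal [set: gT]).
  have : s \in 'Z([set: gT]).
    apply/centerP; split; first by rewrite inE.
    by move=> t _; apply: Hs.
  by rewrite Z1 inE => /eqP.
case/negP: nabS.
rewrite abelianE -{1}ZT; exact: subsetIr.
Qed.

Lemma nontriv : exists s : gT, s != 1.
Proof.
apply: NNPP => H; case/negP: nabS.
apply/centsP => x _ y _.
have ex : forall z : gT, z = 1 by move=> z; apply/eqP; apply: NNPP => nz; apply: H; exists z; exact/negP.
by rewrite /commute (ex x) (ex y).
Qed.

Lemma noncomm (s : gT) : s != 1 -> exists t, s * t != t * s.
Proof.
move=> ns; apply: NNPP => H; case/eqP: ns; apply: center_triv => t.
apply/eqP; apply: NNPP => nt; apply: H; exists t; exact/negP.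
Qed.

Lemma perfectS : [~: [set: gT], [set: gT]] = [set: gT].
Proof.
have /simpleP [_ simG] := simS.
have N : [~: [set: gT], [set: gT]]%G <| [set: gT]%G.
  exact: (der_normal 1 [set: gT]).
have [D1|//] := simG _ N.
case/negP: nabS; rewrite abelianE; exact/commG1P.
Qed.

End GT.

Definition pb (P : Prop) : bool := if excluded_middle_informative P then true else false.
Lemma pbP (P : Prop) : reflect P (pb P).
Proof. rewrite /pb; case: excluded_middle_informative => H; constructor; done. Qed.

Ltac emi := match goal with |- context [excluded_middle_informative ?P] =>
  let E := fresh "E" in destruct (excluded_middle_informative P) as [E|E] end.

Section Part2.
Variables (gT : finGroupType) (I : Type).
Hypothesis simS : simple [set: gT].
Hypothesis nabS : ~~ abelian [set: gT].
Variable U : (I -> gT) -> Prop.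
Hypothesis NU : normal_subgroup U.
Variable reps : list (I -> gT).
Hypothesis Hreps : forall g, exists r, List.In r reps /\ U (pmul (pinv r) g).

Definition ee (i : I) (x : gT) : I -> gT :=
  fun j => if excluded_middle_informative (j = i) then x else 1.
Definition chi (A : I -> Prop) (x : gT) : I -> gT :=
  fun j => if excluded_middle_informative (A j) then x else 1.

Lemma U_ext f g : U f -> (forall k, f k = g k) -> U g.
Proof. by move=> Uf H; have <- : f = g by apply: functional_extensionality. Qed.

Lemma Uone : U (@pone gT I). Proof. by case: NU => [[H _ _] _]. Qed.
Lemma Umul f g : U f -> U g -> U (pmul f g). Proof. by case: NU => [[_ H _] _]; apply: H. Qed.
Lemma Uinv f : U f -> U (pinv f). Proof. by case: NU => [[_ _ H] _]; apply: H. Qed.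
Lemma Uconj f g : U f -> U (pmul (pinv g) (pmul f g)). Proof. by case: NU => _; apply. Qed.

Definition good i := forall y, U (ee i y).

Lemma good_of i x : x != 1 -> U (ee i x) -> good i.
Proof.
move=> nx Ux.
pose X := [set y : gT | pb (U (ee i y))].
have gX : group_set X.
  apply/group_setP; split.
    rewrite inE; apply/pbP. apply: (@U_ext (@pone gT I) (ee i 1) Uone) => k.
    by rewrite /ee /pone; emi.
  move=> y z; rewrite !inE => /pbP Hy /pbP Hz; apply/pbP.
  apply: (U_ext (Umul Hy Hz)) => k.
  by rewrite /ee /pmul; emi => //; rewrite mulg1.
pose G := Group gX.
have nG : G <| [set: gT].
  apply/andP; split; first exact: subsetT.
  apply/subsetP => y _; rewrite inE; apply/subsetP => z.
  rewrite mem_conjg !inE => /pbP Hz; apply/pbP.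
  apply: (U_ext (Uconj (ee i y) Hz)) => k.
  rewrite /ee /pmul /pinv; emi.
    by rewrite conjgE invgK !mulgA mulVg mul1g mulgKV.
  by rewrite invg1 !mul1g.
have /simpleP [_ simG] := simS.
case: (simG G nG) => HG.
  have : x \in G by rewrite inE; apply/pbP.
  by rewrite HG inE (negbTE nx).
move=> y; have : y \in G by rewrite HG inE.
by rewrite inE => /pbP.
Qed.

Lemma inv_cancel (r a b : gT) : (r^-1 * a)^-1 * (r^-1 * b) = a^-1 * b.
Proof. by rewrite invMg invgK mulgA mulgK. Qed.

Lemma two_bad i j s0 r : i <> j -> s0 != 1 -> U (pmul (pinv r) (ee i s0)) ->
  U (pmul (pinv r) (ee j s0)) -> good i.
Proof.
move=> nij ns Hi Hj.
have [t nt] := noncomm simS nabS ns.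
have Uw : U (pmul (ee i s0^-1) (ee j s0)).
  apply: (U_ext (Umul (Uinv Hi) Hj)) => k.
  rewrite /pmul /pinv inv_cancel /ee; do 2 emi; subst => //.
  all: try by rewrite ?invg1 ?mulg1 ?mul1g.

have Uq := Umul (Uinv Uw) (Uconj (ee i t^-1) Uw).
apply: (@good_of i (s0 * t * s0^-1 * t^-1)).
  apply/negP => /eqP H; move/eqP: nt; apply.
  have H' : s0 * t * s0^-1 = t by rewrite -[RHS]mul1g -H mulgKV.
  by rewrite -{2}H' mulgKV.
apply: (U_ext Uq) => k.
rewrite /pmul /pinv /ee; do 2 emi; subst => //.
all: rewrite /= ?invg1 ?invgK ?mulg1 ?mul1g ?mulgA ?mulVg ?invgK ?invg1 //.
Qed.

Lemma bad_list : exists J : list I, forall i, ~ good i -> List.In i J.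
Proof.
have [s0 ns] := nontriv nabS.
case: (classic (inhabited I)) => [[i0]|nI]; last by exists nil => i; case: nI; constructor.
pose rho i := epsilon (inhabits (@pone gT I))
  (fun r => List.In r reps /\ U (pmul (pinv r) (ee i s0))).
have rhoP : forall i, List.In (rho i) reps /\ U (pmul (pinv (rho i)) (ee i s0)).
  by move=> i; exact: (epsilon_spec _ _ (Hreps (ee i s0))).
pose f := fun r => epsilon (inhabits i0) (fun i => ~ good i /\ rho i = r).
exists (map f reps) => i bi.
have [bj rj] : ~ good (f (rho i)) /\ rho (f (rho i)) = rho i.
  by apply: (epsilon_spec (inhabits i0) (fun k => ~ good k /\ rho k = rho i)); exists i.
have -> : i = f (rho i).
  apply: NNPP => nij; apply: bi.
  case: (rhoP i) => _ Hi; case: (rhoP (f (rho i))) => _ Hj; rewrite rj in Hj.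
  exact: (two_bad nij ns Hi Hj).
exact: (List.in_map f _ _ (proj1 (rhoP i))).
Qed.

Variable O : ((I -> gT) -> Prop) -> Prop.
Hypothesis top : is_topology_on U O.
Hypothesis mulc : mul_continuous U (@pmul gT I) O.
Hypothesis comp : compact_on U O.
Hypothesis haus : hausdorff_on U O.

Lemma open_local (T : (I -> gT) -> Prop) :
  (forall x, T x -> exists D, [/\ O D, D x & forall y, D y -> T y]) -> O T.
Proof.
move=> H; case: top => _ _ _ Hun _.
have -> : T = (fun x => exists A, (O A /\ forall y, A y -> T y) /\ A x).
  apply: functional_extensionality => x; apply: propositional_extensionality; split.
    move=> Tx; have [D [OD Dx DT]] := H x Tx; exists D; tauto.
  by move=> [A [[_ AT] Ax]]; apply: AT.
by apply: Hun => A [].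
Qed.

Lemma open_neq a b : U a -> U b -> O (fun f => U f /\ pmul f a <> pmul b f).
Proof.
move=> Ua Ub; apply: open_local => f [Uf ne].
have [V [W [OV OW Vfa Wbf VW]]] := haus (Umul Uf Ua) (Umul Ub Uf) ne.
have [A [B [OA OB Af Ba AB]]] := mulc Uf Ua OV Vfa.
have [A' [B' [OA' OB' Ab B'f AB']]] := mulc Ub Uf OW Wbf.
case: top => _ _ sub _ Hint.
exists (fun x => A x /\ B' x); split.
- exact: Hint.
- by split.
- move=> y [Ay B'y]; split; first exact: (sub _ OA _ Ay).
  move=> E; apply: (VW (pmul y a)); [exact: AB | rewrite E; exact: AB'].
Qed.

Lemma open_A g i : good i -> O (fun f => U f /\ f i <> g i).
Proof.
move=> gi; apply: open_local => f [Uf ne].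
have ngf : (g i)^-1 * f i != 1.
  apply/negP => /eqP H; apply: ne.
  by rewrite -(mulKVg (g i) (f i)) H mulg1.
have [x nx] := noncomm simS nabS ngf.
pose y := g i * x * (g i)^-1.
exists (fun h => U h /\ pmul h (ee i x) <> pmul (ee i y) h); split.
- exact: open_neq (gi x) (gi y).
- split => // E.
  have := congr1 (fun h => h i) E; rewrite /pmul /ee; emi; last by case: E0.
  move=> /= Ei; move/eqP: nx; apply.
  rewrite /y in Ei.
  by rewrite -mulgA Ei !mulgA mulVg mul1g.
- move=> h [Uh nh]; split => // hi; apply: nh.
  apply: functional_extensionality => k; rewrite /pmul /ee; emi => /=; last by rewrite mulg1 mul1g.
  by rewrite E hi /y mulgKV.
Qed.

Lemma approx g li : (forall i, List.In i li -> good i) ->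
  exists f, U f /\ forall i, List.In i li -> f i = g i.
Proof.
elim: li => [|a li IH] H; first by exists (@pone gT I); split => //; exact: Uone.
have [f [Uf Hf]] : exists f, U f /\ forall i, List.In i li -> f i = g i.
  by apply: IH => i Hi; apply: H; right.
exists (pmul (ee a (g a * (f a)^-1)) f); split.
  apply: Umul Uf; apply: H; left; done.
move=> i /= Hi; rewrite /pmul /ee; emi => /=.
  by rewrite E mulgKV.
rewrite mul1g; case: Hi => [E'|Hi]; last exact: Hf.
by case: E; rewrite E'.
Qed.

Lemma surj g : exists f, U f /\ forall i, good i -> f i = g i.
Proof.
apply: NNPP => Hn.
pose C := fun D => exists i, good i /\ D = (fun f => U f /\ f i <> g i).
have [l [lC lcov]] : exists l, (forall A, List.In A l -> C A) /\
    (forall x, U x -> exists A, List.In A l /\ A x).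
  apply: comp.
    by move=> A [i [gi ->]]; apply: open_A.
  move=> x Ux.
  have [i [gi ni]] : exists i, good i /\ x i <> g i.
    apply: NNPP => H; apply: Hn; exists x; split => // i gi.
    apply: NNPP => ne; apply: H; by exists i.
  by exists (fun f => U f /\ f i <> g i); split; [exists i | ].
have [li [lig lil]] : exists li, (forall i, List.In i li -> good i) /\
    forall A, List.In A l -> exists i, List.In i li /\ A = (fun f => U f /\ f i <> g i).
  clear lcov; elim: l lC => [|A l IH] lC.
    by exists nil; split.
  have [li [lig lil]] := IH (fun B HB => lC B (or_intror HB)).
  have [i [gi EA]] := lC A (or_introl erefl).
  exists (i :: li); split.
    by move=> k /= [<-|]; [|apply: lig].
  move=> B /= [<-|HB]; first by exists i; split; [left|].
  by have [k [Hk EB]] := lil B HB; exists k; split; [right|].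
have [f [Uf Hf]] := approx g lig.
have [A [HA Af]] := lcov f Uf.
have [i [Hi EA]] := lil A HA.
rewrite EA in Af; case: Af => _; apply; exact: Hf.
Qed.

Lemma commU J (HJ : forall i, ~ good i -> List.In i J) g h :
  (forall j, List.In j J -> h j = 1) -> U (pmul (pinv g) (pmul (pinv h) (pmul g h))).
Proof.
move=> hJ; have [f [Uf Hf]] := surj g.
apply: (U_ext (Umul (Uinv Uf) (Uconj h Uf))) => k.
rewrite /pmul /pinv.
case: (classic (good k)) => gk; first by rewrite Hf.
have hk : h k = 1 by apply: hJ; apply: HJ.
by rewrite hk !invg1 !mul1g !mulg1 !mulVg.
Qed.

Lemma chiU J (HJ : forall i, ~ good i -> List.In i J) (s : gT) (A : I -> Prop) :
  (forall j, List.In j J -> ~ A j) -> U (chi A s).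
Proof.
pose X := [set s : gT | pb (forall A : I -> Prop,
   (forall j, List.In j J -> ~ A j) -> U (chi A s))].
have gX : group_set X.
  apply/group_setP; split.
    rewrite inE; apply/pbP => B _; apply: (U_ext Uone) => k; rewrite /chi /pone; emi => //.
  move=> x y; rewrite !inE => /pbP Hx /pbP Hy; apply/pbP => B HB.
  apply: (U_ext (Umul (Hx B HB) (Hy B HB))) => k; rewrite /chi /pmul; emi => //.
  by rewrite mulg1.
pose G := Group gX.
have sX : [~: [set: gT], [set: gT]] \subset G.
  rewrite /commutator gen_subG; apply/subsetP => z /imset2P [x y _ _ ->].
  rewrite inE; apply/pbP => B HB.
  apply: (U_ext (@commU J HJ (chi B x) (chi B y) _)).
    move=> j Hj; rewrite /chi; emi => //; by case: (HB j Hj).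
  move=> k; rewrite /pmul /pinv /chi; emi => /=; last by rewrite !invg1 !mul1g.
  by [].
have : s \in G by apply: (subsetP sX); rewrite (perfectS simS nabS) inE.
by rewrite inE => /pbP; apply.
Qed.

Lemma valU J (HJ : forall i, ~ good i -> List.In i J) (vs : seq gT) : forall g,
  (forall j, List.In j J -> g j = 1) -> (forall k, g k = 1 \/ g k \in vs) -> U g.
Proof.
elim: vs => [|v vs IH] g gJ gv.
  by apply: (U_ext Uone) => k; case: (gv k).
case: (eqVneq v 1) => [v1|nv].
  apply: IH => // k; case: (gv k) => [->|]; first by left.
  by rewrite in_cons => /orP [/eqP ->|]; [left|right].
pose g' := fun k => if excluded_middle_informative (g k = v) then 1 else g k.
have Ug' : U g'.
  apply: IH.
    move=> j Hj; rewrite /g'; emi => //; exact: gJ.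
  move=> k; rewrite /g'; emi => /=; first by left.
  case: (gv k) => [->|]; first by left.
  by rewrite in_cons => /orP [/eqP|]; [|right].
have Uc : U (chi (fun k => g k = v) v).
  apply: (chiU HJ) => j Hj E; rewrite gJ // in E.
  by rewrite -E eqxx in nv.
apply: (U_ext (Umul Uc Ug')) => k; rewrite /pmul /chi /g'; emi => /=.
  by rewrite mulg1 E.
by rewrite mul1g.
Qed.

Lemma part2_open : prod_open U.
Proof.
have [J HJ] := bad_list.
move=> f Uf; exists J => g Hg.
have Uh : U (pmul (pinv f) g).
  apply: (@valU J HJ (enum gT) (pmul (pinv f) g)).
    by move=> j Hj; rewrite /pmul /pinv (Hg j Hj) mulVg.
  by move=> k; right; rewrite mem_enum.
by apply: (U_ext (Umul Uf Uh)) => k; rewrite /pmul /pinv mulKVg.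
Qed.

End Part2.

Theorem mainTheorem10 (gT : finGroupType) (I : Type) :
  simple [set: gT] -> ~~ abelian [set: gT] -> infinite_type I ->
  ~ strongly_complete_prod gT I /\
  (forall U : (I -> gT) -> Prop, normal_subgroup U -> finite_index U ->
     prod_open U \/ ~ profinite_type U).
Proof.
move=> simS nabS infI; split.
  by apply: part1 => //; exact: nontriv nabS.
move=> U NU [reps Hreps].
case: (classic (profinite_type U)) => [[O [top mulc _ comp [haus _]]]|]; last by right.
left; exact: (part2_open simS nabS NU Hreps top mulc comp haus).
Qed.
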